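(* Let $X$ be a $0$-dimensional, $\mathbb N$-compact space of non-measurable cardinality. Every continuous character $\chi:C_p(X,\mathbb Z)\to\mathbb T$ extends to a continuous character $\tilde\chi:C_p(X,\mathbb R)\to\mathbb T$, i.e. $\tilde\chi|_{C_p(X,\mathbb Z)}=\chi$.
   Context: Spaces are Tikhonov; $0$-dimensional means having a base of clopen sets; $\mathbb N$-compact means homeomorphic to a closed subspace of a product of copies of the discrete space $\mathbb N$. $C_p(X,\mathbb Z)$ (resp. $C_p(X,\mathbb R)$) is the group of continuous functions $X\to\mathbb Z$ with $\mathbb Z$ discrete (resp. $X\to\mathbb R$) with pointwise addition and the topology of pointwise convergence. $\mathbb T$ is the unit circle group, and a character is a continuous homomorphism into $\mathbb T$. *)

(* Defs.v *)
From HB Require Import structures.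
From mathcomp Require Import all_boot all_order all_algebra.
From mathcomp Require Import all_classical all_reals all_analysis.
Set Implicit Arguments. Unset Strict Implicit. Unset Printing Implicit Defensive.
Import Order.TTheory GRing.Theory Num.Theory.
Import numFieldNormedType.Exports.
Local Open Scope classical_set_scope.
Local Open Scope ring_scope.

Definition tikhonov (X : topologicalType) : Prop :=
  accessible_space X /\ completely_regular_space X.

Definition zero_dim_base (X : topologicalType) : Prop :=
  forall (U : set X) (x : X), open U -> U x ->
    exists V : set X, [/\ clopen V, V x & V `<=` U].

(** N-compact: homeomorphic to a closed subspace of a product of copies of
    the discrete space nat (nat carries the discrete topology in
    mathcomp-analysis; {ptws I -> nat} is the product topology). *)
Definition N_compact (X : topologicalType) : Prop :=
  exists (I : Type) (e : X -> {ptws I -> nat}),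
    [/\ injective e, continuous e,
        (forall U : set X, open U ->
           exists V : set {ptws I -> nat}, open V /\ e @` U = V `&` range e)
      & closed (range e)].

(** A (Ulam) measurable-cardinal witness on the set T: a two-valued
    countably additive measure on all subsets of T, with total mass 1,
    vanishing on singletons.  (mu A = true means "A has measure 1".)
    Countable additivity for a {0,1}-valued measure says: for pairwise
    disjoint A_n, the union has measure 1 iff some A_n has measure 1,
    and two disjoint sets cannot both have measure 1. *)
Definition ulam_measure (T : Type) (mu : set T -> bool) : Prop :=
  [/\ mu setT,
      (forall x : T, ~~ mu [set x]),
      (forall A B : set T, mu A -> mu B -> A `&` B !=set0)
    & (forall A : nat -> set T,
         (forall i j, i <> j -> A i `&` A j = set0) ->
         (mu (\bigcup_n A n) <-> exists n, mu (A n)))].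

Definition nonmeasurable_card (T : Type) : Prop :=
  forall mu : set T -> bool, ~ ulam_measure mu.

(** The circle group T, realized as the unit circle in R x R with complex
    multiplication. *)
Definition circle (R : realType) : set (R * R) :=
  [set z | z.1 ^+ 2 + z.2 ^+ 2 = 1].

Definition cmul (R : realType) (z w : R * R) : R * R :=
  (z.1 * w.1 - z.2 * w.2, z.1 * w.2 + z.2 * w.1).

Definition Zdisc := discrete_topology int.

(** The underlying sets of C_p(X,Z) and C_p(X,R), as subsets of the
    pointwise-convergence (product) spaces of all functions. *)
Definition CpZ (X : topologicalType) : set {ptws X -> Zdisc} :=
  [set f | continuous (f : X -> Zdisc)].

Definition CpR (X : topologicalType) (R : realType) : set {ptws X -> R} :=
  [set f | continuous (f : X -> R)].

Definition cont_char_Z (X : topologicalType) (R : realType)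
    (chi : {ptws X -> Zdisc} -> R * R) : Prop :=
  [/\ (forall f, @CpZ X f -> @circle R (chi f)),
      (forall f g, @CpZ X f -> @CpZ X g ->
         chi (fun x => (f x + g x)%R : int) = cmul (chi f) (chi g))
    & {within @CpZ X, continuous chi}].

Definition cont_char_R (X : topologicalType) (R : realType)
    (chi : {ptws X -> R} -> R * R) : Prop :=
  [/\ (forall f, @CpR X R f -> @circle R (chi f)),
      (forall f g, @CpR X R f -> @CpR X R g ->
         chi (fun x => f x + g x) = cmul (chi f) (chi g))
    & {within @CpR X R, continuous chi}].

(* Main.v *)
Require Import Defs.
From HB Require Import structures.
From mathcomp Require Import all_boot all_order all_algebra.
From mathcomp Require Import all_classical all_reals all_analysis.
From mathcomp Require Import ring lra.
Import Order.TTheory GRing.Theory Num.Theory.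
Import numFieldNormedType.Exports.
Local Open Scope classical_set_scope.
Local Open Scope ring_scope.
Lemma angle_ex (R : realType) (a b : R) : a ^+ 2 + b ^+ 2 = 1 ->
  exists t : R, cos t = a /\ sin t = b.
Proof.
move=> h.
have ha : -1 <= a <= 1.
  have := sqr_ge0 b; have := sqr_ge0 (a - 1); have := sqr_ge0 (a+1).
  by move=> *; apply/andP; split; nra.
have sa : sin (acos a) = `|b|.
  rewrite sin_acos // -h addrAC subrr add0r sqrtr_sqr //.
have ca : cos (acos a) = a by apply: acosK; rewrite in_itv.
case: (lerP 0 b) => hb.
  by exists (acos a); rewrite ca sa ger0_norm.
exists (- acos a); rewrite cosN sinN ca sa ltr0_norm // opprK //.
Qed.
Lemma cpZP (X : topologicalType) (f : X -> Zdisc) :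
  continuous f <-> forall x : X, \forall y \near x, f y = f x.
Proof.
split => H x.
  have := H x; move/(@discrete_cvg Zdisc (f @ x) (f x) _).
  by [].
apply/(@discrete_cvg Zdisc (f @ x) (f x) _).
exact: H.
Qed.

Lemma cpZ_op (X : topologicalType) (op : int -> int -> int) (f g : X -> Zdisc) :
  continuous f -> continuous g -> continuous (fun x => (op (f x) (g x) : Zdisc)).
Proof.
move=> /cpZP hf /cpZP hg; apply/cpZP => x.
by near=> y; rewrite (near (hf x) y) // (near (hg x) y).
Unshelve. all: by end_near.
Qed.

Lemma cpZ_cst (X : topologicalType) (c : int) : continuous (fun _ : X => (c : Zdisc)).
Proof. by apply/cpZP => x; apply: nearW. Qed.

Lemma cpZ_ind (X : topologicalType) (V : set X) : clopen V ->
  continuous (fun x => ((if `[< V x >] then 1 else 0 : int) : Zdisc)).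
Proof.
move=> [oV cV]; apply/cpZP => x.
case: (pselect (V x)) => Vx.
  have : nbhs x V by apply: open_nbhs_nbhs.
  by apply: filterS => y Vy; rewrite !asboolT.
have : nbhs x (~` V) by apply: open_nbhs_nbhs; split => //; exact: closed_openC.
by apply: filterS => y Vy; rewrite !asboolF.
Qed.
Lemma ptws_fin (X : topologicalType) (f : {ptws X -> Zdisc})
    (A : set {ptws X -> Zdisc}) :
  nbhs f A -> exists s : seq X, forall g : {ptws X -> Zdisc},
    (forall x, x \in s -> g x = f x) -> A g.
Proof.
pose G : set_system {ptws X -> Zdisc} := [set B | exists s : seq X,
  forall g : {ptws X -> Zdisc}, (forall x, x \in s -> g x = f x) -> B g].
have FG : Filter G.
  split.
  - by exists [::].
  - move=> P Q [s1 h1] [s2 h2]; exists (s1 ++ s2) => g hg; split.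
      by apply: h1 => x xs; apply: hg; rewrite mem_cat xs.
    by apply: h2 => x xs; apply: hg; rewrite mem_cat xs orbT.
  - by move=> P Q PQ [s h]; exists s => g /h /PQ.
have : {ptws, G --> f}.
  apply/(@pointwise_cvgP X Zdisc G f FG) => t.
  apply/(@discrete_cvg Zdisc _ (f t) _).
  by exists [:: t] => g hg; rewrite /= hg // mem_seq1.
by move=> /(_ A) H /H.
Qed.
Lemma half_trivial (R : realType) (T : Type) (P : T -> Prop) (c : T -> R * R)
    (dbl : T -> T) :
  (forall f, P f -> P (dbl f)) -> (forall f, P f -> circle (c f)) ->
  (forall f, P f -> c (dbl f) = cmul (c f) (c f)) ->
  (forall f, P f -> 0 < (c f).1) -> forall f, P f -> c f = (1, 0).
Proof.
move=> Pd Pc Pm Pp.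
have key : forall k f, P f -> (2 ^+ k : R) * (1 - (c f).1) < 1.
  elim=> [|k IH] f Pf.
    by rewrite expr0 mul1r; have := Pp f Pf; lra.
  have := IH _ (Pd f Pf); rewrite Pm //= exprS.
  have := Pc f Pf; rewrite /circle /=.
  have := Pp f Pf.
  case: (c f) => a b /= ha hab h.
  have h2 : 0 <= (2 ^+ k : R) by rewrite exprn_ge0.
  have hb : 0 <= b ^+ 2 by rewrite sqr_ge0.
  have ha1 : a <= 1 by nra.
  have e : 1 - (a * a - b * b) = 2 * (1 - a) * (1 + a) by rewrite -!expr2; nra.
  rewrite /= e in h.
  have h4 : 2 * (1 - a) <= 2 * (1 - a) * (1 + a) by nra.
  have := ler_wpM2l h2 h4; nra.
move=> f Pf.
have := Pc f Pf; have := Pp f Pf; rewrite /circle.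
have : 1 - (c f).1 <= 0.
  rewrite leNgt; apply/negP => d0.
  set d := 1 - (c f).1 in d0 *.
  pose k := (Num.Def.trunc d^-1).+1.
  have h1 : d^-1 < k%:R by apply: truncnS_gt.
  have h2 : (k%:R : R) < (2 ^+ k : R).
    by rewrite -natrX ltr_nat ltn_expl.
  have := key k f Pf; rewrite -/d.
  have : 1 < (2 ^+ k : R) * d.
    by rewrite -ltr_pdivrMr // div1r; apply: lt_trans h1 h2.
  lra.
case: (c f) => a b /= h1 h2 h3.
have ea : a = 1 by nra.
have : b ^+ 2 = 0 by subst a; nra.
by move/eqP; rewrite sqrf_eq0 => /eqP ->; rewrite ea.
Qed.
Lemma closed_seq (X : topologicalType) : accessible_space X ->
  forall s : seq X, closed [set y | y \in s].
Proof.
move=> T1; elim=> [|a t IH].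
  have -> : [set y | y \in [::]] = set0 :> set X by apply/seteqP; split => y.
  exact: closed0.
have -> : [set y | y \in a :: t] = [set a] `|` [set y | y \in t].
  apply/seteqP; split => y /=; rewrite in_cons.
    by case/orP => [/eqP ->|h]; [left|right].
  by case => [->|->]; rewrite ?eqxx ?orbT.
apply: closedU => //; exact: accessible_closed_set1.
Qed.

Lemma sum_delta (T : eqType) (V : zmodType) (r : seq T) (x : T) (F : T -> V) :
  uniq r -> x \in r -> \sum_(y <- r) (if y == x then F y else 0) = F x.
Proof.
elim: r => // a r IH /= /andP[anr ur]; rewrite in_cons big_cons.
case/orP => [/eqP ->|xr].
  rewrite eqxx big1_seq ?addr0 // => y [] /=; case: eqP => // ->.
  by rewrite (negbTE anr).
case: eqP => [e|_]; first by subst; rewrite xr in anr.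
by rewrite add0r IH.
Qed.

Lemma cmul_inv (R : realType) (z w : R * R) : circle z -> cmul z w = (1, 0) ->
  w = (z.1, - z.2).
Proof.
case: z w => a b [c d]; rewrite /circle /cmul /= => h [e1 e2].
have hc : c = a.
  transitivity (c * (a ^+ 2 + b ^+ 2)); first by rewrite h mulr1.
  transitivity (a * (a * c - b * d) + b * (a * d + b * c)); first by ring.
  by rewrite e1 e2; ring.
have hd : d = - b.
  transitivity (d * (a ^+ 2 + b ^+ 2)); first by rewrite h mulr1.
  transitivity (a * (a * d + b * c) - b * (a * c - b * d)); first by ring.
  by rewrite e1 e2; ring.
by rewrite hc hd.
Qed.
Lemma eval_cont (X : topologicalType) (R : realType) (a : X) (g : {ptws X -> R}) :
  (fun h : {ptws X -> R} => h a) @ g --> g a.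
Proof.
have := (@pointwise_cvgP X R (nbhs g) g _).1 (@cvg_id _ (nbhs g)) a.
exact.
Qed.

Lemma Lcont (X : topologicalType) (R : realType) (th : X -> R) (t : seq X) :
  continuous (fun g : {ptws X -> R} => \sum_(x <- t) th x * g x).
Proof.
elim: t => [|a t IH].
  have -> : (fun g : {ptws X -> R} => \sum_(x <- [::]) th x * g x) = fun _ => 0.
    by apply: funext => g; rewrite big_nil.
  move=> g.
  exact: (@cvg_cst R 0 _ (nbhs g) _).
have -> : (fun g : {ptws X -> R} => \sum_(x <- a :: t) th x * g x) =
  (fun g : {ptws X -> R} => th a * g a + \sum_(x <- t) th x * g x).
  by apply: funext => g; rewrite big_cons.
move=> g.
have h0 : (fun _ : {ptws X -> R} => th a) @ g --> th a.
  exact: (@cvg_cst R (th a) _ (nbhs g) _).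
have h1 : (fun h : {ptws X -> R} => th a * h a) @ g --> th a * g a.
  exact: (@cvgM R _ (nbhs g) _ (fun _ => th a) (fun h : {ptws X -> R} => h a) _ _ h0 (@eval_cont X R a g)).
exact: (@cvgD _ R^o _ _ _ (fun h : {ptws X -> R} => th a * h a)
   (fun h : {ptws X -> R} => \sum_(x <- t) th x * h x) _ _ h1 (IH g)).
Qed.
Lemma cont_intr (X : topologicalType) (R : realType) (f : X -> Zdisc) :
  continuous f -> continuous (fun x => ((f x : int)%:~R : R)).
Proof.
move=> /cpZP hf x A /= hA.
have := hf x; apply: filterS => y e; rewrite /preimage /= e.
exact: nbhs_singleton hA.
Qed.

Definition chiR (X : topologicalType) (R : realType) (th : X -> R) (t : seq X)
  (g : {ptws X -> R}) : R * R :=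
  (cos (\sum_(x <- t) th x * g x), sin (\sum_(x <- t) th x * g x)).

Lemma chiR_add (X : topologicalType) (R : realType) (th : X -> R) (t : seq X)
  (f g : {ptws X -> R}) :
  @chiR X R th t (fun x => f x + g x) = cmul (@chiR X R th t f) (@chiR X R th t g).
Proof.
rewrite /chiR /cmul /=.
have -> : \sum_(x <- t) th x * (f x + g x) =
  \sum_(x <- t) th x * f x + \sum_(x <- t) th x * g x.
  by rewrite -big_split /=; apply: eq_bigr => x _; rewrite mulrDr.
by rewrite cosD sinD [X in _ = (_, X)]addrC.
Qed.

Lemma chiR_char (X : topologicalType) (R : realType) (th : X -> R) (t : seq X) :
  cont_char_R (@chiR X R th t).
Proof.
split.
- by move=> f _; rewrite /circle /chiR /= cos2Dsin2.
- by move=> f g _ _; exact: chiR_add.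
apply: (@continuous_subspaceT _ _ (@CpR X R) (@chiR X R th t)) => g.
pose L := fun h : {ptws X -> R} => \sum_(x <- t) th x * h x.
have hc : (fun h => cos (L h)) @ g --> cos (L g).
  exact: (@cvg_comp _ _ _ L cos _ _ _ (@Lcont X R th t g) (@continuous_cos R (L g))).
have hs : (fun h => sin (L h)) @ g --> sin (L g).
  exact: (@cvg_comp _ _ _ L sin _ _ _ (@Lcont X R th t g) (@continuous_sin R (L g))).
exact: (@cvg_pair _ R R (nbhs g) (nbhs (cos (L g))) (nbhs (sin (L g))) _ _ _ _ _ hc hs).
Qed.
Theorem proposition6p2 (R : realType) (X : topologicalType) :
  tikhonov X -> zero_dim_base X -> N_compact X -> nonmeasurable_card X ->
  forall chi : {ptws X -> Zdisc} -> R * R,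
    cont_char_Z chi ->
    exists chi' : {ptws X -> R} -> R * R,
      cont_char_R chi' /\
      (forall f : {ptws X -> Zdisc}, @CpZ X f ->
         chi' (fun x => ((f x : int)%:~R : R)) = chi f).
Proof.
move=> [T1 _] zd _ _ chi [chiC chiM chiK].
pose z0 : {ptws X -> Zdisc} := fun _ => 0.
have Cz0 : CpZ z0 := @cpZ_cst X 0.
have chi0 : chi z0 = (1, 0).
  have e : (fun x => (z0 x + z0 x)%R : int) = z0.
    by apply: funext => x; rewrite /z0 addr0.
  have := chiM z0 z0 Cz0 Cz0; rewrite e.
  have := chiC z0 Cz0; rewrite /circle /cmul.
  case: (chi z0) => a b /= hc [e1 e2].
  have hb : b = 0.
    have : b * (1 - 2 * a) = 0.
      by transitivity (b - (a * b + b * a)); [ring | rewrite -e2 subrr].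
    move/eqP; rewrite mulf_eq0 => /orP [/eqP //|/eqP h].
    exfalso; have h2 : a * 2 = 1 by lra.
    have := sqr_ge0 b; nra.
  subst b; have : a = 1 by nra.
  by move=> ->.
have hc := (@subspace_continuousP _ (@CpZ X) _ chi).1 chiK z0 Cz0.
have hf : fst @ nbhs (chi z0) --> (chi z0).1 by exact: cvg_fst.
have hfst : (fun g => (chi g).1) @ within (@CpZ X) (nbhs z0) --> (chi z0).1.
  exact: (@cvg_comp _ _ _ chi fst _ _ _ hc hf).
rewrite chi0 /= in hfst.
have FF : Filter (within (@CpZ X) (nbhs z0)) by exact: within_filter.
have hpos := @cvgr_gt R _ _ FF _ _ hfst 0 ltr01.
have [s hs] := @ptws_fin X z0 _ hpos.
pose N (g : {ptws X -> Zdisc}) := CpZ g /\ forall x, x \in s -> g x = 0.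
have chiN : forall g, N g -> chi g = (1, 0).
  apply: (@half_trivial R _ N chi (fun g => (fun x => (g x + g x)%R : int))).
  - move=> g [Cg hg]; split; first exact: (@cpZ_op X (fun a b => a + b) g g Cg Cg).
    by move=> x xs; rewrite hg // addr0.
  - by move=> g [Cg _]; exact: chiC.
  - by move=> g [Cg _]; exact: chiM.
  - move=> g [Cg hg]; apply: hs => // x xs; exact: hg.
pose s' := undup s.
have hV : forall x : X, exists V : set X,
    clopen V /\ V x /\ (forall y, y \in s -> y != x -> ~ V y).
  move=> x.
  have oU : open (~` [set y | y \in seq.filter (predC1 x) s]).
    by apply: closed_openC; exact: closed_seq.
  have Ux : (~` [set y | y \in seq.filter (predC1 x) s]) x.
    by rewrite /= mem_filter /= eqxx.
  have [V [cV Vx VU]] := zd _ x oU Ux.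
  exists V; split => //; split => // y ys yx Vy.
  by apply: (VU y Vy); rewrite /= mem_filter /= yx ys.
have [V hV'] := choice hV.
pose e (x : X) : {ptws X -> Zdisc} := fun y => if `[< V x y >] then 1 else 0 : int.
have Ce : forall x, CpZ (e x).
  by move=> x; apply: cpZ_ind; case: (hV' x).
have eval_e : forall x y, x \in s -> y \in s -> e x y = if y == x then 1 else 0.
  move=> x y xs ys; rewrite /e; case: eqP => [->|/eqP yx].
    rewrite asboolT //; by case: (hV' x) => _ [].
  rewrite asboolF //; case: (hV' x) => _ [_ H]; exact: H y ys yx.
have hth : forall x, exists t : R, cos t = (chi (e x)).1 /\ sin t = (chi (e x)).2.
  by move=> x; apply: angle_ex; exact: chiC.
have [th hth'] := choice hth.
exists (@chiR X R th s'); split; first exact: chiR_char.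
pose psi (g : {ptws X -> Zdisc}) := @chiR X R th s' (fun x => ((g x : int)%:~R : R)).
pose K g := CpZ g /\ chi g = psi g.
have Kadd : forall f g, K f -> K g -> K (fun x => (f x + g x)%R : int).
  move=> f g [Cf ef] [Cg eg]; split.
    exact: (@cpZ_op X (fun a b => a + b) f g Cf Cg).
  rewrite chiM // ef eg /psi -chiR_add; congr (@chiR X R th s' _).
  by apply: funext => x; rewrite intrD.
have psi0 : psi z0 = (1, 0).
  rewrite /psi /chiR big1 ?cos0 ?sin0 // => x _.
  by rewrite /z0 mulr0z mulr0.
have KN : forall g, N g -> K g.
  move=> g Ng; split; first by case: Ng.
  rewrite chiN // /psi /chiR big_seq big1 ?cos0 ?sin0 // => x.
  by rewrite mem_undup => xs; rewrite (Ng.2 x xs) mulr0z mulr0.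
have Kneg : forall f, K f -> K (fun x => (- f x)%R : int).
  move=> f [Cf ef].
  have Cn : CpZ (fun x => (- f x)%R : int).
    exact: (@cpZ_op X (fun a _ => - a) f f Cf Cf).
  split => //.
  have e0 : (fun x => (f x + (fun x => (- f x)%R : int) x)%R : int) = z0.
    by apply: funext => x; rewrite /z0 /= subrr.
  have h1 : cmul (chi f) (chi (fun x => (- f x)%R : int)) = (1, 0).
    by rewrite -chiM // e0 chi0.
  have h2 : cmul (psi f) (psi (fun x => (- f x)%R : int)) = (1, 0).
    rewrite -psi0 /psi -chiR_add; congr (@chiR X R th s' _).
    by apply: funext => x; rewrite /z0 -intrD subrr.
  have cpf : circle (psi f) by rewrite -ef; exact: chiC.
  by rewrite (@cmul_inv R _ _ (chiC _ Cf) h1) (@cmul_inv R _ _ cpf h2) ef.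
have Kmul : forall f, K f -> forall n : int, K (fun x => (n * f x)%R : int).
  move=> f Kf.
  have Kpos : forall k : nat, K (fun x => (k%:Z * f x)%R : int).
    elim=> [|k IH].
      have -> : (fun x => (0%:Z * f x)%R : int) = z0.
        by apply: funext => x; rewrite mul0r.
      by apply: KN; split.
    have -> : (fun x => (k.+1%:Z * f x)%R : int) = (fun x => (f x + k%:Z * f x)%R : int).
      by apply: funext => x; rewrite -addn1 PoszD mulrDl mul1r addrC.
    exact: Kadd.
  case=> k; first exact: Kpos.
  have -> : (fun x => (Negz k * f x)%R : int) = (fun x => (- (k.+1%:Z * f x))%R : int).
    by apply: funext => x; rewrite NegzE mulNr.
  exact: (Kneg _ (Kpos k.+1)).
have sumE : forall (F : X -> R) x, x \in s ->
    \sum_(y <- s') F y * ((e x y)%:~R) = F x.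
  move=> F x xs.
  rewrite -(@sum_delta X R s' x F) ?undup_uniq ?mem_undup //.
  rewrite big_seq [RHS]big_seq; apply: eq_bigr => y; rewrite mem_undup => ys.
  by rewrite eval_e //; case: (y == x); rewrite ?mulr1z ?mulr1 ?mulr0z ?mulr0.
have Ke : forall x, x \in s -> K (e x).
  move=> x xs; split; first exact: Ce.
  rewrite /psi /chiR sumE //.
  by rewrite (proj1 (hth' x)) (proj2 (hth' x)); case: (chi (e x)).
move=> f Cf.
pose S (t : seq X) : {ptws X -> Zdisc} := fun y => \sum_(x <- t) f x * e x y.
have KS : forall t, (forall x, x \in t -> x \in s) -> K (S t).
  elim=> [|a t IH] ht.
    have -> : S [::] = z0 by apply: funext => y; rewrite /S big_nil.
    by apply: KN; split.
  have -> : S (a :: t) = (fun y => (f a * e a y + S t y)%R : int).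
    by apply: funext => y; rewrite /S big_cons.
  apply: Kadd.
    by apply: Kmul; apply: Ke; apply: ht; rewrite mem_head.
  by apply: IH => x xt; apply: ht; rewrite in_cons xt orbT.
have KSs : K (S s') by apply: KS => x; rewrite mem_undup.
pose h : {ptws X -> Zdisc} := fun y => (f y - S s' y)%R.
have Nh : N h.
  split; first exact: (@cpZ_op X (fun a b => a - b) f (S s') Cf KSs.1).
  move=> x xs; rewrite /h /S.
  have -> : \sum_(y <- s') f y * e y x = f x.
    rewrite -(@sum_delta X int s' x f) ?undup_uniq ?mem_undup //.
    rewrite big_seq [RHS]big_seq; apply: eq_bigr => y; rewrite mem_undup => ys.
    by rewrite (eval_e y x ys xs) [x == y]eq_sym; case: (y == x); rewrite ?mulr1 ?mulr0.
  by rewrite subrr.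
have Kf : K (fun y => (h y + S s' y)%R : int) by apply: Kadd => //; exact: KN.
have ef : (fun y => (h y + S s' y)%R : int) = f.
  by apply: funext => y; rewrite /h subrK.
by rewrite ef in Kf; case: Kf => _ ->.
Qed.
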